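(* Let $H$ be a real Hilbert space and let $T\in K(H)$ be a non-zero compact operator. Then the following are equivalent: (i) $T$ is $\varepsilon$-smooth for some $\varepsilon\in[0,2)$; (ii) $M_T=\{\pm x_0\}$ for some $x_0\in S_H$; (iii) $T$ is smooth.
   Context: Smoothness notions for $T$ refer to $T$ as an element of the space $L(H)$ of bounded linear operators on $H$ with the operator norm. For a normed space $Z$ and $z\in Z\setminus\{\theta\}$, $J(z)=\{\phi\in S_{Z^*}:\phi(z)=\|z\|\}$; $z$ is smooth if $J(z)$ is a singleton and $\varepsilon$-smooth if $\operatorname{diam}J(z)=\sup_{\phi,\psi\in J(z)}\|\phi-\psi\|\le\varepsilon$. $M_T=\{x\in S_H:\|Tx\|=\|T\|\}$ is the norm attainment set of $T$. *)

(* Defs.v *)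
From HB Require Import structures.
From mathcomp Require Import all_boot all_order all_algebra.
From mathcomp Require Import all_classical all_reals all_analysis.
Set Implicit Arguments. Unset Strict Implicit. Unset Printing Implicit Defensive.
Import Order.TTheory GRing.Theory Num.Theory.
Import numFieldNormedType.Exports.
Local Open Scope classical_set_scope.
Local Open Scope ring_scope.

Section Defs.
Variables (R : realType) (H : completeNormedModType R).

(* ip is an inner product inducing the norm of H; together with completeness
   this makes H a real Hilbert space. *)
Definition is_inner_product (ip : H -> H -> R) : Prop :=
  [/\ forall x y, ip x y = ip y x,
      forall a x y z, ip (a *: x + y) z = a * ip x z + ip y z &
      forall x, ip x x = `|x| ^+ 2].

Definition bounded_linear (A : H -> H) : Prop :=
  (forall a x y, A (a *: x + y) = a *: A x + A y) /\
  exists C : R, forall x, `|A x| <= C * `|x|.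

Definition opnorm (A : H -> H) : R :=
  sup [set `|A x| | x in [set x : H | `|x| <= 1]].

Definition compact_operator (A : H -> H) : Prop :=
  bounded_linear A /\ compact (closure (A @` [set x : H | `|x| <= 1])).

(* Elements of the dual L(H)^*: bounded linear functionals on L(H)
   (functionals are represented as maps on H -> H; only their values on L(H)
   matter). *)
Definition dual_elt (phi : (H -> H) -> R) : Prop :=
  (forall a (A B : H -> H), bounded_linear A -> bounded_linear B ->
      phi (fun x => a *: A x + B x) = a * phi A + phi B) /\
  exists C : R, forall A, bounded_linear A -> `|phi A| <= C * opnorm A.

Definition dnorm (phi : (H -> H) -> R) : R :=
  sup [set `|phi A| | A in [set A | bounded_linear A /\ opnorm A <= 1]].

Definition Jset (T : H -> H) : set ((H -> H) -> R) :=
  [set phi | dual_elt phi /\ dnorm phi = 1 /\ phi T = opnorm T].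

Definition dual_eq (phi psi : (H -> H) -> R) : Prop :=
  forall A, bounded_linear A -> phi A = psi A.

Definition smooth (T : H -> H) : Prop :=
  exists phi, Jset T phi /\ forall psi, Jset T psi -> dual_eq psi phi.

Definition eps_smooth (eps : R) (T : H -> H) : Prop :=
  forall phi psi, Jset T phi -> Jset T psi ->
    dnorm (fun A => phi A - psi A) <= eps.

Definition MT (T : H -> H) : set H :=
  [set x | `|x| = 1 /\ `|T x| = opnorm T].

End Defs.

(* Main.v *)
Require Import Defs.
From HB Require Import structures.
From mathcomp Require Import all_boot all_order all_algebra.
From mathcomp Require Import all_classical all_reals all_analysis.
From mathcomp Require Import ring lra.
Import Order.TTheory GRing.Theory Num.Theory.
Import numFieldNormedType.Exports.
Local Open Scope classical_set_scope.
Local Open Scope ring_scope.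
Set Implicit Arguments. Unset Strict Implicit. Unset Printing Implicit Defensive.

Section IP.
Variables (R : realType) (H : completeNormedModType R).
Variables (ip : H -> H -> R) (Hip : is_inner_product ip).

Lemma ipC x y : ip x y = ip y x.
Proof. by case: Hip. Qed.
Lemma ipxx x : ip x x = `|x| ^+ 2.
Proof. by case: Hip. Qed.
Lemma ipL a x y z : ip (a *: x + y) z = a * ip x z + ip y z.
Proof. by case: Hip. Qed.
Lemma ip0l z : ip 0 z = 0.
Proof.
have := ipL 1 0 0 z; rewrite scale1r addr0 mul1r => h; lra.
Qed.
Lemma ip0r z : ip z 0 = 0.
Proof. by rewrite ipC ip0l. Qed.
Lemma ipDl x y z : ip (x + y) z = ip x z + ip y z.
Proof. by have := ipL 1 x y z; rewrite scale1r mul1r. Qed.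
Lemma ipZl a x z : ip (a *: x) z = a * ip x z.
Proof. by have := ipL a x 0 z; rewrite addr0 ip0l addr0. Qed.
Lemma ipNl x z : ip (- x) z = - ip x z.
Proof. by rewrite -scaleN1r ipZl mulN1r. Qed.
Lemma ipBl x y z : ip (x - y) z = ip x z - ip y z.
Proof. by rewrite ipDl ipNl. Qed.
Lemma ipDr x y z : ip z (x + y) = ip z x + ip z y.
Proof. by rewrite ipC ipDl ![ip _ z]ipC. Qed.
Lemma ipZr a x z : ip z (a *: x) = a * ip z x.
Proof. by rewrite ipC ipZl ipC. Qed.
Lemma ipNr x z : ip z (- x) = - ip z x.
Proof. by rewrite ipC ipNl ipC. Qed.
Lemma ipBr x y z : ip z (x - y) = ip z x - ip z y.
Proof. by rewrite ipDr ipNr. Qed.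

Lemma normDZ a b x y :
  `|a *: x + b *: y| ^+ 2 = a ^+ 2 * `|x| ^+ 2 + 2 * a * b * ip x y + b ^+ 2 * `|y| ^+ 2.
Proof.
rewrite -ipxx ipDl !ipDr !ipZl !ipZr !ipxx (ipC y x); ring.
Qed.

Lemma normD2 x y : `|x + y| ^+ 2 = `|x| ^+ 2 + 2 * ip x y + `|y| ^+ 2.
Proof. by have := normDZ 1 1 x y; rewrite !scale1r; lra. Qed.

Lemma normB2 x y : `|x - y| ^+ 2 = `|x| ^+ 2 - 2 * ip x y + `|y| ^+ 2.
Proof. by have := normDZ 1 (-1) x y; rewrite scale1r scaleN1r; lra. Qed.

Lemma CS x y : `|ip x y| <= `|x| * `|y|.
Proof.
have [y0|ynz] := eqVneq y 0.
  by rewrite y0 ip0r !normr0 mulr0.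
have b0 : 0 < `|y| by rewrite normr_gt0.
have := normDZ (`|y| ^+ 2) (- ip x y) x y.
set p := ip x y; set a := `|x|; set b := `|y| => E.
have h : 0 <= b ^+ 2 * (a ^+ 2 * b ^+ 2 - p ^+ 2).
  have -> : b ^+ 2 * (a ^+ 2 * b ^+ 2 - p ^+ 2) = (b ^+ 2) ^+ 2 * a ^+ 2 + 2 * b ^+ 2 * - p * p + (- p) ^+ 2 * b ^+ 2 by ring.
  by rewrite -E sqr_ge0.
have a0 : 0 <= a by rewrite /a normr_ge0.
have h2 : p ^+ 2 <= (a * b) ^+ 2.
  rewrite pmulr_rge0 ?exprn_gt0 // in h; lra.
rewrite -ler_sqr ?nnegrE ?normr_ge0 ?mulr_ge0 //.
rewrite real_normK ?num_real //. exact: (ltW b0).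
Qed.

End IP.

Section Op.
Variables (R : realType) (H : completeNormedModType R).
Implicit Types (A B : H -> H) (x y : H).

Lemma linD A x y : bounded_linear A -> A (x + y) = A x + A y.
Proof. by case=> L _; have := L 1 x y; rewrite !scale1r. Qed.
Lemma lin0 A : bounded_linear A -> A 0 = 0.
Proof.
move=> bA; have := linD 0 0 bA; rewrite addr0 => /eqP.
by rewrite -subr_eq0 opprD addrA subrr add0r oppr_eq0 => /eqP.
Qed.
Lemma linZ A a x : bounded_linear A -> A (a *: x) = a *: A x.
Proof. by move=> bA; have := (proj1 bA) a x 0; rewrite (lin0 bA) !addr0. Qed.
Lemma linN A x : bounded_linear A -> A (- x) = - A x.
Proof. by move=> bA; rewrite -scaleN1r linZ // scaleN1r. Qed.
Lemma linB A x y : bounded_linear A -> A (x - y) = A x - A y.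
Proof. by move=> bA; rewrite linD // linN. Qed.

Lemma bl_zero : bounded_linear (fun _ : H => 0 : H).
Proof.
split; first by move=> *; rewrite scaler0 addr0.
by exists 0 => x; rewrite normr0 mul0r.
Qed.

Lemma bl_comb a A B : bounded_linear A -> bounded_linear B ->
  bounded_linear (fun x => a *: A x + B x).
Proof.
move=> bA bB; split.
  by move=> c x y; rewrite (proj1 bA) (proj1 bB) !scalerDr !scalerA (mulrC a c) addrACA.
case: bA => _ [C hC]; case: bB => _ [D hD].
exists (`|a| * `|C| + `|D|) => x.
rewrite (le_trans (ler_normD _ _)) // normrZ mulrDl -mulrA.
apply: lerD.
  apply: ler_wpM2l => //; apply: (le_trans (hC x)); apply: ler_wpM2r => //.
  exact: ler_norm.
by apply: (le_trans (hD x)); apply: ler_wpM2r => //; exact: ler_norm.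
Qed.

Lemma bl_scale a A : bounded_linear A -> bounded_linear (fun x => a *: A x).
Proof.
move=> bA; have := bl_comb a bA bl_zero.
by have -> : (fun x => a *: A x + 0) = (fun x => a *: A x) by apply: funext => x; rewrite addr0.
Qed.

Lemma opnorm_has_ub A : bounded_linear A ->
  has_ubound [set `|A x| | x in [set x : H | `|x| <= 1]].
Proof.
case=> _ [C hC]; exists `|C| => _ [x /= hx <-].
apply: (le_trans (hC x)); apply: (le_trans (ler_norm _)).
rewrite normrM (normr_id x); rewrite -[leRHS]mulr1; apply: ler_wpM2l => //.
Qed.

Lemma opnorm_ub A x : bounded_linear A -> `|x| <= 1 -> `|A x| <= opnorm A.
Proof. by move=> bA hx; apply: ub_le_sup; [exact: opnorm_has_ub | exists x]. Qed.

Lemma opnorm_le A M : bounded_linear A -> (forall x, `|x| <= 1 -> `|A x| <= M) ->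
  opnorm A <= M.
Proof.
move=> bA hM; apply: ge_sup.
  by exists `|A 0|, 0 => //=; rewrite normr0.
by move=> _ [x /= hx <-]; exact: hM.
Qed.

Lemma opnorm_ge0 A : bounded_linear A -> 0 <= opnorm A.
Proof. by move=> bA; apply: le_trans (opnorm_ub (x:=0) bA _); rewrite ?normr0. Qed.

Lemma opnorm_bound A x : bounded_linear A -> `|A x| <= opnorm A * `|x|.
Proof.
move=> bA; have [->|xnz] := eqVneq x 0.
  by rewrite lin0 // !normr0 mulr0.
have nx : 0 < `|x| by rewrite normr_gt0.
have := opnorm_ub (x := `|x|^-1 *: x) bA.
rewrite normrZ normfV normr_id mulVf ?gt_eqF // lexx => /(_ isT).
rewrite linZ // normrZ normfV normr_id => h.
by rewrite -ler_pdivrMr // mulrC.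
Qed.

End Op.

Section Dual.
Variables (R : realType) (H : completeNormedModType R).
Implicit Types (A B : H -> H) (x y : H) (phi psi f : (H -> H) -> R).

Lemma dual_zero phi : dual_elt phi -> phi (fun _ => 0) = 0.
Proof.
case=> L _; have := L 1 _ _ (@bl_zero R H) (@bl_zero R H).
have -> : (fun x : H => 1 *: (0 : H) + 0) = (fun _ => 0) by apply: funext => x; rewrite scaler0 addr0.
by rewrite mul1r => h; lra.
Qed.

Lemma dual_scale phi a A : dual_elt phi -> bounded_linear A ->
  phi (fun x => a *: A x) = a * phi A.
Proof.
move=> dp bA; have := (proj1 dp) a _ _ bA (@bl_zero R H).
have -> : (fun x : H => a *: A x + 0) = (fun x => a *: A x) by apply: funext => x; rewrite addr0.
by rewrite dual_zero // addr0.
Qed.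

Lemma dnorm_has_ub f M :
  (forall A, bounded_linear A -> opnorm A <= 1 -> `|f A| <= M) ->
  has_ubound [set `|f A| | A in [set A | bounded_linear A /\ opnorm A <= 1]].
Proof. by move=> hM; exists M => _ [A [bA oA] <-]; exact: hM. Qed.

Lemma dnorm_ge f M A :
  (forall A, bounded_linear A -> opnorm A <= 1 -> `|f A| <= M) ->
  bounded_linear A -> opnorm A <= 1 -> `|f A| <= dnorm f.
Proof. by move=> hM bA oA; apply: ub_le_sup; [exact: dnorm_has_ub hM | exists A]. Qed.

Lemma opnorm_zero : opnorm (fun _ : H => 0 : H) <= 1.
Proof. by apply: opnorm_le; [exact: bl_zero | move=> x _; rewrite normr0]. Qed.

Lemma dnorm_le f M :
  (forall A, bounded_linear A -> opnorm A <= 1 -> `|f A| <= M) -> dnorm f <= M.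
Proof.
move=> hM; apply: ge_sup.
  by exists `|f (fun _ => 0)|, (fun _ => 0) => //; split; [exact: bl_zero | exact: opnorm_zero].
by move=> _ [A [bA oA] <-]; exact: hM.
Qed.


Lemma dual_has_ub phi : dual_elt phi -> exists M,
  forall A, bounded_linear A -> opnorm A <= 1 -> `|phi A| <= M.
Proof.
case=> _ [C hC]; exists `|C| => A bA oA.
apply: (le_trans (hC A bA)); apply: (le_trans (ler_norm _)).
rewrite normrM (ger0_norm (opnorm_ge0 bA)) -[leRHS]mulr1; exact: ler_wpM2l.
Qed.

Lemma dual_abs_le phi A : dual_elt phi -> bounded_linear A -> opnorm A <= 1 ->
  `|phi A| <= dnorm phi.
Proof. by move=> dp bA oA; have [M hM] := dual_has_ub dp; exact: dnorm_ge hM bA oA. Qed.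

Lemma dual_le phi B : dual_elt phi -> dnorm phi <= 1 -> bounded_linear B ->
  phi B <= opnorm B.
Proof.
move=> dp dn bB; have o0 := opnorm_ge0 bB.
have [oz|opos] := eqVneq (opnorm B) 0.
  case: (dp) => _ [C hC]; have := hC B bB; rewrite oz mulr0 => h.
  by apply: le_trans (ler_norm _) h.
have op : 0 < opnorm B by rewrite lt_neqAle eq_sym opos.
set o := opnorm B in o0 op opos *.
pose B' := fun x => o^-1 *: B x.
have bB' : bounded_linear B' by exact: bl_scale.
have oB' : opnorm B' <= 1.
  apply: opnorm_le => // x hx; rewrite /B' normrZ ger0_norm ?invr_ge0 //.
  rewrite ler_pdivrMl // mulr1; exact: opnorm_ub.
have -> : B = (fun x => o *: B' x).
  by apply: funext => x; rewrite /B' scalerA mulfV ?gt_eqF // scale1r.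
rewrite dual_scale //.
have h1 := le_trans (dual_abs_le dp bB' oB') dn.
have h2 : phi B' <= 1 by apply: le_trans (ler_norm _) h1.
by rewrite -[leRHS]mulr1; apply: ler_wpM2l.
Qed.

End Dual.

Section Main.
Variables (R : realType) (H : completeNormedModType R).
Variables (ip : H -> H -> R) (Hip : is_inner_product ip).
Variables (T : H -> H) (HT : compact_operator T) (HT0 : exists x, T x != 0).

Let bT : bounded_linear T := proj1 HT.
Let N := opnorm T.

Lemma TN x : `|x| <= 1 -> `|T x| <= N.
Proof. exact: opnorm_ub bT. Qed.
Lemma TNx x : `|T x| <= N * `|x|.
Proof. exact: opnorm_bound bT. Qed.
Lemma Npos : 0 < N.
Proof.
case: HT0 => x Tx; have h := TNx x.
have p : 0 < `|T x| by rewrite normr_gt0.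
have n0 : 0 <= N := opnorm_ge0 bT; rewrite lt_neqAle n0 andbT.
apply/negP => /eqP e; move: h; rewrite -e mul0r => h; lra.
Qed.

Lemma ballE (x y : H) e : ball x e y = (`|x - y| < e).
Proof. by rewrite -ball_normE. Qed.

Lemma CL (S : set H) : (forall x, S x -> `|x| <= 1) ->
  (forall eta, 0 < eta -> exists x, S x /\ N - eta < `|T x|) ->
  exists z, MT T z /\ forall eps, 0 < eps -> exists x, S x /\ `|x - z| < eps.
Proof.
move=> hS hE.
have NP := Npos.
pose E := fun eta : R => T @` [set x | S x /\ N - eta < `|T x|].
pose F := filter_from [set eta : R | 0 < eta] E.
have FF : ProperFilter F.
  apply: filter_from_proper; last first.
    by move=> i /= hi; have [x [Sx hx]] := hE i hi; exists (T x), x.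
  apply: filter_from_filter; first by exists 1 => /=.
  move=> i j /= hi hj; exists (Order.min i j); first by rewrite /= lt_min hi hj.
  have m1 : Order.min i j <= i by rewrite ge_min lexx.
  have m2 : Order.min i j <= j by rewrite ge_min lexx orbT.
  move=> _ [x [Sx hx] <-]; split; exists x => //; split => //; lra.
have FC : F (closure (T @` [set x : H | `|x| <= 1])).
  exists 1 => //=; move=> _ [x [Sx _] <-]; apply: subset_closure; exists x => //.
  exact: hS.
have [y [_ cly]] := (proj2 HT) F FF FC.
have cl : forall eta, 0 < eta -> exists x, S x /\ N - eta < `|T x| /\ `|y - T x| < eta.
  move=> eta he.
  have FE : F (E eta) by exists eta.
  have [_ [[x [Sx hx] <-]]] := cly (E eta) (ball y eta) FE (nbhsx_ballx y eta he).
  by rewrite ballE => hb; exists x.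
pose D := fun eta : R => [set x | S x /\ N - eta < `|T x| /\ `|y - T x| < eta].
pose G := filter_from [set eta : R | 0 < eta] D.
have GG : ProperFilter G.
  apply: filter_from_proper; last by move=> i /= hi; have [x hx] := cl i hi; exists x.
  apply: filter_from_filter; first by exists 1 => /=.
  move=> i j /= hi hj; exists (Order.min i j); first by rewrite /= lt_min hi hj.
  have m1 : Order.min i j <= i by rewrite ge_min lexx.
  have m2 : Order.min i j <= j by rewrite ge_min lexx orbT.
  move=> x [Sx [hx hy]].
  split; split => //; split => //; lra.
have key : forall eta x x', 0 < eta -> eta <= N / 2 -> D eta x -> D eta x' ->
    N ^+ 2 * `|x - x'| ^+ 2 < 16 * N * eta.
  move=> eta x x' he heN [Sx [h1 h2]] [Sx' [h1' h2']].
  have n1 := hS _ Sx; have n1' := hS _ Sx'.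
  have d : `|T x - T x'| < 2 * eta.
    have := ler_normD (T x - y) (y - T x'); rewrite addrA subrK (distrC (T x) y) => h; lra.
  have t2 : `|T x + T x| <= `|T x + T x'| + `|T x - T x'|.
    by have := ler_normD (T x + T x') (T x - T x'); rewrite addrACA subrr addr0.
  have t3 : `|T x + T x| = 2 * `|T x|.
    by rewrite -mulr2n normrMn mulr_natl.
  have t4 : `|T x + T x'| <= N * `|x + x'|.
    by rewrite -linD //; exact: TNx.
  have par : `|x - x'| ^+ 2 + `|x + x'| ^+ 2 <= 4.
    rewrite (normB2 Hip) (normD2 Hip).
    have a1 : `|x| ^+ 2 <= 1 by rewrite -(expr1n _ 2) ler_sqr ?nnegrE.
    have a2 : `|x'| ^+ 2 <= 1 by rewrite -(expr1n _ 2) ler_sqr ?nnegrE.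
    lra.
  set s := `|x + x'| in t4 par.
  have s0 : 0 <= s by rewrite /s normr_ge0.
  have h3 : 2 * N - 4 * eta < N * s by lra.
  have h4 : 0 <= 2 * N - 4 * eta by lra.
  have h5 : (2 * N - 4 * eta) ^+ 2 < (N * s) ^+ 2.
    by rewrite ltr_sqr ?nnegrE // ?mulr_ge0 // ltW.
  have h6 : 4 * N ^+ 2 - 16 * N * eta < N ^+ 2 * s ^+ 2.
    have : (2 * N - 4 * eta) ^+ 2 = 4 * N ^+ 2 - 16 * N * eta + 16 * eta ^+ 2 by ring.
    have : (N * s) ^+ 2 = N ^+ 2 * s ^+ 2 by ring.
    have : 0 <= eta ^+ 2 by exact: sqr_ge0.
    lra.
  have h7 : N ^+ 2 * `|x - x'| ^+ 2 <= N ^+ 2 * (4 - s ^+ 2).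
    apply: ler_wpM2l; [exact: sqr_ge0 | lra].
  lra.
have Gc : cauchy G.
  apply: cauchy_exP => e he.
  pose eta := Order.min (N / 2) (e ^+ 2 * N / 16).
  have hN2 : 0 < N / 2 by lra.
  have he2 : 0 < e ^+ 2 * N / 16 by rewrite !mulr_gt0 ?exprn_gt0.
  have etap : 0 < eta by rewrite lt_min hN2 he2.
  have eta1 : eta <= N / 2 by rewrite ge_min lexx.
  have eta2 : eta <= e ^+ 2 * N / 16 by rewrite ge_min lexx orbT.
  have [x1 Dx1] := cl eta etap.
  exists x1; exists eta => //= x Dx; rewrite ballE.
  have k := key eta x1 x etap eta1 Dx1 Dx.
  have k2 : N ^+ 2 * `|x1 - x| ^+ 2 < N ^+ 2 * e ^+ 2.
    apply: lt_le_trans k _.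
    have : 16 * N * eta <= 16 * N * (e ^+ 2 * N / 16).
      by apply: ler_wpM2l => //; lra.
    have -> : 16 * N * (e ^+ 2 * N / 16) = N ^+ 2 * e ^+ 2 by field.
    done.
  rewrite ltr_pM2l ?exprn_gt0 // in k2.
  by rewrite -ltr_sqr ?nnegrE // ltW.
have [z Gz] : exists z : H, G --> z by exists (lim G); exact: cauchy_cvg.
have near : forall eta eps, 0 < eta -> 0 < eps -> exists x, D eta x /\ `|z - x| < eps.
  move=> eta eps he hp.
  have G1 : G (D eta) by exists eta.
  have G2 : G (ball z eps) by apply: Gz; exact: nbhsx_ballx.
  have [x [h1 h2]] := filter_ex (filterI G1 G2).
  by exists x; rewrite -ballE.
have z1 : `|z| <= 1.
  rewrite leNgt; apply/negP => hz.
  have hp : 0 < `|z| - 1 by lra.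
  have [x [[Sx _] hx]] := near 1 (`|z| - 1) ltr01 hp.
  have := ler_normD x (z - x); rewrite (addrC x) subrK.
  have := hS _ Sx; lra.
have Tz : N <= `|T z|.
  rewrite leNgt; apply/negP => hz.
  set d := N - `|T z|.
  have dE : d = N - `|T z| by [].
  have dp : 0 < d by rewrite /d; lra.
  have d2 : 0 < d / 2 by lra.
  have d4 : 0 < d / (4 * N) by rewrite divr_gt0 //; lra.
  have [x [[Sx [hx _]] hxz]] := near (d / 2) (d / (4 * N)) d2 d4.
  have e1 : T x = T z + T (x - z) by rewrite linB // addrC subrK.
  have e2 := ler_normD (T z) (T (x - z)); rewrite -e1 in e2.
  have e3 := TNx (x - z); rewrite distrC in e3.
  have e4 : N * `|z - x| <= N * (d / (4 * N)) by apply: ler_wpM2l; lra.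
  have e5 : N * (d / (4 * N)) = d / 4 by field; lra.
  lra.
have Tz2 := TNx z.
have Tz3 : `|T z| <= N by exact: TN.
exists z; split.
  split; last by change (`|T z| = N); apply/eqP; rewrite eq_le Tz3 Tz.
  apply/eqP; rewrite eq_le z1 /=.
  have : N * 1 <= N * `|z| by lra.
  by rewrite ler_pM2l.
move=> eps he; have [x [[Sx _] hx]] := near 1 eps ltr01 he.
by exists x; rewrite distrC.
Qed.

End Main.

Section Main2.
Variables (R : realType) (H : completeNormedModType R).
Variables (ip : H -> H -> R) (Hip : is_inner_product ip).
Variables (T : H -> H) (HT : compact_operator T) (HT0 : exists x, T x != 0).

Let bT : bounded_linear T := proj1 HT.
Let N := opnorm T.
Let NP : 0 < N := Npos HT HT0.

Definition phix (x : H) := fun A : H -> H => ip (A x) (T x) / N.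

Lemma ipTT x : MT T x -> ip (T x) (T x) = N ^+ 2.
Proof. by case=> _ h; rewrite (ipxx Hip) h. Qed.

Lemma phix_bound x A : MT T x -> bounded_linear A -> `|phix x A| <= opnorm A.
Proof.
move=> [x1 Tx] bA; rewrite /phix normrM normfV (gtr0_norm NP).
rewrite ler_pdivrMr //; apply: le_trans (CS Hip _ _) _.
rewrite Tx; apply: ler_wpM2r; first exact: ltW.
by apply: opnorm_ub => //; rewrite x1.
Qed.

Lemma J_phix x : MT T x -> Jset T (phix x).
Proof.
move=> Mx; split; [split|split].
- move=> a A B bA bB; rewrite /phix (ipL Hip); field; rewrite gt_eqF //.
- exists 1; move=> A bA; rewrite mul1r; exact: (phix_bound Mx bA).
- apply/eqP; rewrite eq_le; apply/andP; split.
    by apply: dnorm_le => A bA oA; apply: le_trans (phix_bound Mx bA) oA.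
  pose A0 := fun v => N^-1 *: T v.
  have bA0 : bounded_linear A0 by exact: bl_scale.
  have oA0 : opnorm A0 <= 1.
    apply: opnorm_le => // v hv; rewrite /A0 normrZ normfV (gtr0_norm NP).
    by rewrite ler_pdivrMl // mulr1; exact: opnorm_ub.
  have := @dnorm_ge R H (phix x) 1 A0 (fun A bA oA => le_trans (phix_bound Mx bA) oA) bA0 oA0.
  have -> : phix x A0 = 1.
    rewrite /phix /A0 /= (ipZl Hip) (ipTT Mx); field; rewrite gt_eqF //.
  by rewrite normr1.
- rewrite /phix (ipTT Mx); change (N ^+ 2 / N = N); field; rewrite gt_eqF //.
Qed.

Lemma KL x0 : MT T = [set x0; - x0] -> forall d, 0 < d ->
  exists eta, 0 < eta /\ forall x, `|x| <= 1 -> N - eta < `|T x| ->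
    `|x - x0| < d \/ `|x + x0| < d.
Proof.
move=> hM d hd; apply: contrapT => hn.
pose S := [set x | `|x| <= 1 /\ d <= `|x - x0| /\ d <= `|x + x0|].
have hS : forall x, S x -> `|x| <= 1 by move=> x [].
have hE : forall eta, 0 < eta -> exists x, S x /\ N - eta < `|T x|.
  move=> eta he; apply: contrapT => hx; apply: hn; exists eta; split => // x x1 hTx.
  case: (boolP (`|x - x0| < d)) => [h1|]; first by left.
  rewrite -leNgt => h1.
  case: (boolP (`|x + x0| < d)) => [h2|]; first by right.
  rewrite -leNgt => h2.
  by exfalso; apply: hx; exists x.
have [z [Mz hz]] := CL Hip HT HT0 hS hE.
have [x [[_ [h1 h2]] hx]] := hz d hd.
rewrite hM in Mz; case: Mz => hz0; rewrite hz0 in hx.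
  by move: hx; rewrite ltNge h1.
by move: hx; rewrite opprK ltNge h2.
Qed.

End Main2.

Section Main3.
Variables (R : realType) (H : completeNormedModType R).
Variables (ip : H -> H -> R) (Hip : is_inner_product ip).
Variables (T : H -> H) (HT : compact_operator T) (HT0 : exists x, T x != 0).

Let bT : bounded_linear T := proj1 HT.
Let N := opnorm T.
Let NP : 0 < N := Npos HT HT0.

Lemma ip_cont A x y : bounded_linear A -> `|x| <= 1 -> `|y| <= 1 ->
  `|ip (A x) (T x) - ip (A y) (T y)| <= 2 * opnorm A * N * `|x - y|.
Proof.
move=> bA x1 y1.
have e : ip (A x) (T x) - ip (A y) (T y) = ip (A (x - y)) (T x) + ip (A y) (T (x - y)).
  rewrite !linB // (ipBl Hip) (ipBr Hip); ring.
rewrite e; apply: le_trans (ler_normD _ _) _.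
have K0 := opnorm_ge0 bA.
have c1 : `|ip (A (x - y)) (T x)| <= opnorm A * `|x - y| * N.
  apply: le_trans (CS Hip _ _) _; apply: ler_pM => //; first exact: opnorm_bound.
  exact: TN.
have c2 : `|ip (A y) (T (x - y))| <= opnorm A * (N * `|x - y|).
  apply: le_trans (CS Hip _ _) _; apply: ler_pM => //; last exact: TNx.
  exact: opnorm_ub.
have : opnorm A * `|x - y| * N + opnorm A * (N * `|x - y|) = 2 * opnorm A * N * `|x - y| by ring.
lra.
Qed.

Lemma uniq_lower x0 psi A : `|x0| = 1 -> MT T = [set x0; - x0] ->
  Jset T psi -> bounded_linear A -> phix ip T x0 A <= psi A.
Proof.
move=> x01 hM [dpsi [npsi psiT]] bA.
rewrite leNgt; apply/negP => hlt.
have Mx0 : MT T x0 by rewrite hM; left.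
set g := phix ip T x0 A - psi A.
have gE : g = phix ip T x0 A - psi A by [].
have gp : 0 < g by rewrite gE; lra.
have oA0 := opnorm_ge0 bA.
set K := opnorm A + 1.
have KE : K = opnorm A + 1 by [].
have Kp : 0 < K by lra.
set a := ip (A x0) (T x0).
have aE : phix ip T x0 A = a / N by [].
set phi := a / N.
have aphi : a = N * phi by rewrite /phi; field; rewrite gt_eqF.
have Ka : `|a| <= K * N.
  apply: le_trans (CS Hip _ _) _; apply: ler_pM => //.
    by apply: le_trans (opnorm_ub bA _) _; rewrite ?x01 //; lra.
  by case: Mx0 => _ ->.
have Kphi : `|phi| <= K.
  have : `|a| = N * `|phi| by rewrite aphi normrM gtr0_norm.
  by move=> e; move: Ka; rewrite e mulrC ler_pM2r.
have dpos : 0 < g / (8 * K) by rewrite divr_gt0 //; lra.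
have [eta [etap hKL]] := KL Hip HT HT0 hM dpos.
set b1 := N * g / (2 * K ^+ 2).
set b2 := N * eta / (4 * K * N + K ^+ 2).
set b3 := N / K.
have b1p : 0 < b1 by rewrite /b1 divr_gt0 ?mulr_gt0 ?exprn_gt0.
have b2p : 0 < b2.
  rewrite /b2 divr_gt0 ?mulr_gt0 //; apply: addr_gt0; rewrite ?mulr_gt0 ?exprn_gt0 //.
have b3p : 0 < b3 by rewrite /b3 divr_gt0.
set t := Order.min (Order.min 1 b1) (Order.min b2 b3).
have tp : 0 < t by rewrite /t !lt_min ltr01 b1p b2p b3p.
have t1 : t <= 1 by rewrite /t !ge_min lexx.
have tb1 : t <= b1 by rewrite /t !ge_min lexx !orbT.
have tb2 : t <= b2 by rewrite /t !ge_min lexx !orbT.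
have tb3 : t <= b3 by rewrite /t !ge_min lexx !orbT.
have T1 : t * K ^+ 2 <= N * g / 2.
  have : t * (2 * K ^+ 2) <= b1 * (2 * K ^+ 2) by apply: ler_wpM2r => //; rewrite mulr_ge0 // sqr_ge0.
  have -> : b1 * (2 * K ^+ 2) = N * g by rewrite /b1; field; rewrite gt_eqF // exprn_gt0.
  lra.
have T2 : t * (4 * K * N + K ^+ 2) <= N * eta.
  have hp : 0 < 4 * K * N + K ^+ 2 by apply: addr_gt0; rewrite ?mulr_gt0 ?exprn_gt0.
  have : t * (4 * K * N + K ^+ 2) <= b2 * (4 * K * N + K ^+ 2) by apply: ler_wpM2r => //; exact: ltW.
  have -> : b2 * (4 * K * N + K ^+ 2) = N * eta by rewrite /b2; field; rewrite gt_eqF.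
  done.
have T3 : t * K <= N.
  have : t * K <= b3 * K by apply: ler_wpM2r => //; exact: ltW.
  have -> : b3 * K = N by rewrite /b3; field; rewrite gt_eqF.
  done.
pose Tt := fun v => (- t) *: A v + T v.
have bTt : bounded_linear Tt by exact: bl_comb.
have psiTt : psi Tt = - t * psi A + N by rewrite /Tt (proj1 dpsi) // psiT.
have le1 : psi Tt <= opnorm Tt by apply: dual_le => //; rewrite npsi.
set M := N - t * phi + t * g / 2.
have Mp : 0 <= M.
  have : t * phi <= t * K.
    by apply: ler_wpM2l; [exact: ltW | exact: le_trans (ler_norm _) Kphi].
  have : 0 <= t * g by rewrite mulr_ge0 // ltW.
  rewrite /M; lra.
have M2 : N ^+ 2 + t * N * g - 2 * t * N * phi <= M ^+ 2.
  have -> : M ^+ 2 = N ^+ 2 + t * N * g - 2 * t * N * phi + (t * (g / 2 - phi)) ^+ 2 by rewrite /M; field.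
  have := sqr_ge0 (t * (g / 2 - phi)); lra.
have le2 : opnorm Tt <= M.
  apply: opnorm_le => // v v1.
  have E : `|Tt v| ^+ 2 = t ^+ 2 * `|A v| ^+ 2 - 2 * t * ip (A v) (T v) + `|T v| ^+ 2.
    by rewrite /Tt /= -{1}(scale1r (T v)) (normDZ Hip); ring.
  have w0 : 0 <= `|A v| by [].
  have wK : `|A v| <= K by apply: le_trans (opnorm_ub bA v1) _; lra.
  have tw : t ^+ 2 * `|A v| ^+ 2 <= t ^+ 2 * K ^+ 2.
    by apply: ler_wpM2l; [exact: sqr_ge0 | rewrite ler_sqr ?nnegrE //; lra].
  have q0 : 0 <= `|T v| by [].
  have qN := TN HT v1.
  suff : `|Tt v| ^+ 2 <= M ^+ 2 by rewrite ler_sqr ?nnegrE.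
  rewrite E.
  have [hq|hq] := ltP (N - eta) (`|T v|).
  - have hp : a - N * g / 4 <= ip (A v) (T v).
      have hc : `|ip (A v) (T v) - a| <= N * g / 4.
        have -> : N * g / 4 = 2 * K * N * (g / (8 * K)) by field; rewrite gt_eqF.
        have x0n : `|x0| <= 1 by rewrite x01.
        have mx0n : `|- x0| <= 1 by rewrite normrN x01.
        have aN : ip (A (- x0)) (T (- x0)) = a by rewrite !linN // (ipNl Hip) (ipNr Hip) opprK.
        have c1 : 0 <= 2 * opnorm A * N by rewrite !mulr_ge0 // ltW.
        have c2 : 2 * opnorm A * N <= 2 * K * N by rewrite ler_pM2r // ler_pM2l //; lra.
        case: (hKL v v1 hq) => hd.
        + apply: le_trans (ip_cont bA v1 x0n) _.
          by apply: ler_pM => //; exact: ltW.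
        + rewrite -aN; apply: le_trans (ip_cont bA v1 mx0n) _.
          by rewrite opprK; apply: ler_pM => //; exact: ltW.
      have := ler_norm (ip (A v) (T v) - a); rewrite -normrN opprB => h.
      have := ler_norm (a - ip (A v) (T v)). rewrite distrC. lra.
    have tp2 : t * (a - N * g / 4) <= t * ip (A v) (T v) by apply: ler_wpM2l => //; exact: ltW.
    have q2 : `|T v| ^+ 2 <= N ^+ 2 by rewrite ler_sqr ?nnegrE //; exact: ltW.
    have tK : t * (t * K ^+ 2) <= t * (N * g / 2) by apply: ler_wpM2l => //; exact: ltW.
    have e1 : t * (a - N * g / 4) = t * N * phi - t * N * g / 4 by rewrite aphi; field.
    have e2 : t * (t * K ^+ 2) = t ^+ 2 * K ^+ 2 by ring.
    have e3 : t * (N * g / 2) = t * N * g / 2 by field.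
    lra.
  - have q2 : `|T v| ^+ 2 <= N ^+ 2 - N * eta.
      have etaN : eta <= N by lra.
      have h1 : `|T v| * `|T v| <= (N - eta) * (N - eta) by apply: ler_pM.
      have h2 : eta * eta <= N * eta by apply: ler_wpM2r => //; exact: ltW.
      have : (N - eta) * (N - eta) = N ^+ 2 - 2 * (N * eta) + eta * eta by ring.
      have : `|T v| ^+ 2 = `|T v| * `|T v| by ring.
      lra.
    have pK : - ip (A v) (T v) <= K * N.
      apply: le_trans (ler_norm _) _; rewrite normrN.
      by apply: le_trans (CS Hip _ _) _; apply: ler_pM.
    have tpK : t * (- ip (A v) (T v)) <= t * (K * N) by apply: ler_wpM2l => //; exact: ltW.
    have tt : t ^+ 2 * K ^+ 2 <= t * K ^+ 2.
      have : t * t <= 1 * t by apply: ler_wpM2r => //; exact: ltW.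
      have hK : 0 <= K ^+ 2 by exact: sqr_ge0.
      rewrite mul1r => h; have := ler_wpM2r hK h.
      have -> : t * t * K ^+ 2 = t ^+ 2 * K ^+ 2 by ring.
      done.
    have tphi : t * phi <= t * K.
      by apply: ler_wpM2l; [exact: ltW | exact: le_trans (ler_norm _) Kphi].
    have Ntphi : N * (t * phi) <= N * (t * K) by apply: ler_wpM2l => //; exact: ltW.
    have tg : 0 <= t * N * g by rewrite !mulr_ge0 // ltW.
    have e1 : t * (4 * K * N + K ^+ 2) = 4 * (t * (K * N)) + t * K ^+ 2 by ring.
    have e2 : t * (- ip (A v) (T v)) = - (t * ip (A v) (T v)) by ring.
    have e3 : N * (t * phi) = t * N * phi by ring.
    have e4 : N * (t * K) = t * (K * N) by ring.
    have e5 : 2 * t * ip (A v) (T v) = 2 * (t * ip (A v) (T v)) by ring.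
    have e6 : 2 * t * N * phi = 2 * (t * N * phi) by ring.
    lra.
have tg : 0 < t * g by rewrite mulr_gt0.
have e : t * g = t * phi - t * psi A by rewrite gE aE /phi; ring.
have e2 : t * (g / 2) = t * g / 2 by field.
have : psi Tt <= M by apply: le_trans le1 le2.
rewrite psiTt /M.
have e3 : - t * psi A = - (t * psi A) by ring.
lra.
Qed.

End Main3.

Section Main4.
Variables (R : realType) (H : completeNormedModType R).
Variables (ip : H -> H -> R) (Hip : is_inner_product ip).
Variables (T : H -> H) (HT : compact_operator T) (HT0 : exists x, T x != 0).

Let bT : bounded_linear T := proj1 HT.
Let N := opnorm T.
Let NP : 0 < N := Npos HT HT0.

Lemma normD1Z x s w : `|x + s *: w| ^+ 2 = `|x| ^+ 2 + 2 * s * ip x w + s ^+ 2 * `|w| ^+ 2.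
Proof. by have := normDZ Hip 1 s x w; rewrite scale1r => ->; ring. Qed.

Lemma kernelMT x w : MT T x -> ip (T x) (T w) = N ^+ 2 * ip x w.
Proof.
move=> [x1 Tx']; have Tx : `|T x| = N := Tx'.
have Q : forall v, `|T v| ^+ 2 <= N ^+ 2 * `|v| ^+ 2.
  move=> v; have h := TNx HT v.
  have : `|T v| * `|T v| <= (N * `|v|) * (N * `|v|) by apply: ler_pM.
  have -> : N * `|v| * (N * `|v|) = N ^+ 2 * `|v| ^+ 2 by ring.
  by have -> : `|T v| ^+ 2 = `|T v| * `|T v| by ring.
set B := N ^+ 2 * ip x w - ip (T x) (T w).
set Qw := N ^+ 2 * `|w| ^+ 2 - `|T w| ^+ 2.
have Qw0 : 0 <= Qw by have := Q w; rewrite /Qw; lra.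
have key : forall s, 0 <= 2 * s * B + s ^+ 2 * Qw.
  move=> s; have := Q (x + s *: w).
  rewrite linD // linZ // !normD1Z x1 Tx /B /Qw => h.
  have : N ^+ 2 * (1 ^+ 2 + 2 * s * ip x w + s ^+ 2 * `|w| ^+ 2) = N ^+ 2 + 2 * s * (N ^+ 2 * ip x w) + s ^+ 2 * (N ^+ 2 * `|w| ^+ 2) by ring.
  have : 2 * s * (N ^+ 2 * ip x w - ip (T x) (T w)) + s ^+ 2 * (N ^+ 2 * `|w| ^+ 2 - `|T w| ^+ 2) = 2 * s * (N ^+ 2 * ip x w) + s ^+ 2 * (N ^+ 2 * `|w| ^+ 2) - (2 * s * ip (T x) (T w) + s ^+ 2 * `|T w| ^+ 2) by ring.
  lra.
have c0 : 0 < Qw + 1 by lra.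
have := key (- B / (Qw + 1)).
have -> : 2 * (- B / (Qw + 1)) * B + (- B / (Qw + 1)) ^+ 2 * Qw = - (B ^+ 2 * (Qw + 2)) / (Qw + 1) ^+ 2.
  by field; rewrite gt_eqF.
rewrite pmulr_lge0 ?invr_gt0 ?exprn_gt0 // oppr_ge0 => h.
have : B ^+ 2 <= 0.
  by rewrite -(pmulr_lle0 _ (_ : 0 < Qw + 2)) //; lra.
have := sqr_ge0 B => h1 h2.
have : B ^+ 2 = 0 by lra.
move/eqP; rewrite sqrf_eq0 /B subr_eq0 => /eqP ->; done.
Qed.

Lemma orthoMT x0 y : MT T x0 -> MT T y -> y <> x0 -> y <> - x0 ->
  exists u, MT T u /\ ip x0 u = 0.
Proof.
move=> Mx0 My nx nmx.
have x01 : `|x0| = 1 by case: Mx0.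
have y1 : `|y| = 1 by case: My.
have xx : ip x0 x0 = 1 by rewrite (ipxx Hip) x01 expr1n.
set c := ip y x0.
set w := y - c *: x0.
have wnz : w != 0.
  apply/negP => /eqP w0.
  have yE : y = c *: x0 by apply/eqP; rewrite -subr_eq0 -/w w0.
  have : `|c| = 1 by rewrite -y1 yE normrZ x01 mulr1.
  case: (ger0P c) => hc hn.
    by apply: nx; rewrite yE hn scale1r.
  by apply: nmx; rewrite yE -[c]opprK hn scaleN1r.
have wp : 0 < `|w| by rewrite normr_gt0.
set u := `|w|^-1 *: w.
have u1 : `|u| = 1 by rewrite /u normrZ normfV normr_id mulVf // gt_eqF.
have x0u : ip x0 u = 0.
  rewrite /u (ipZr Hip) /w (ipBr Hip) (ipZr Hip) xx (ipC Hip x0 y) -/c; ring.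
exists u; split => //; split => //.
have TuE : T u = `|w|^-1 *: (T y - c *: T x0) by rewrite /u /w (linZ _ _ bT) (linB _ _ bT) (linZ _ _ bT).
have uE : u = `|w|^-1 *: (y - c *: x0) by [].
have e1 : ip (T u) (T u) = N ^+ 2 * ip u u.
  rewrite {1}TuE (ipZl Hip) (ipBl Hip) (ipZl Hip) !kernelMT //.
  rewrite {3}uE (ipZl Hip) (ipBl Hip) (ipZl Hip); ring.
rewrite (ipxx Hip) (ipxx Hip) u1 expr1n mulr1 in e1.
have : `|T u| ^+ 2 = N ^+ 2 by [].
by move/eqP; rewrite eqrXn2 // ?ltW // => /eqP.
Qed.

Lemma not_two x0 u eps : MT T x0 -> MT T u -> ip x0 u = 0 -> eps < 2 ->
  eps_smooth eps T -> False.
Proof.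
move=> Mx0 Mu x0u he hs.
have x01 : `|x0| = 1 by case: Mx0.
have u1 : `|u| = 1 by case: Mu.
have xx : ip x0 x0 = 1 by rewrite (ipxx Hip) x01 expr1n.
have uu : ip u u = 1 by rewrite (ipxx Hip) u1 expr1n.
have ux0 : ip u x0 = 0 by rewrite (ipC Hip).
have Txu : ip (T x0) (T u) = 0 by rewrite kernelMT // x0u mulr0.
have Tux : ip (T u) (T x0) = 0 by rewrite (ipC Hip).
have Txx : ip (T x0) (T x0) = N ^+ 2 by rewrite (ipxx Hip); case: Mx0 => _ ->.
have Tuu : ip (T u) (T u) = N ^+ 2 by rewrite (ipxx Hip); case: Mu => _ ->.
pose e1 := N^-1 *: T x0.
pose e2 := N^-1 *: T u.
have e11 : ip e1 e1 = 1 by rewrite /e1 (ipZl Hip) (ipZr Hip) Txx; field; rewrite gt_eqF.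
have e22 : ip e2 e2 = 1 by rewrite /e2 (ipZl Hip) (ipZr Hip) Tuu; field; rewrite gt_eqF.
have e12 : ip e1 e2 = 0 by rewrite /e1 /e2 (ipZl Hip) (ipZr Hip) Txu !mulr0.
have ne1 : `|e1| ^+ 2 = 1 by rewrite -(ipxx Hip).
have ne2 : `|e2| ^+ 2 = 1 by rewrite -(ipxx Hip).
pose A := fun v => ip v x0 *: e1 + (- ip v u) *: e2.
have Ab : forall v, `|A v| <= `|v|.
  move=> v.
  have h1 : `|A v| ^+ 2 = ip v x0 ^+ 2 + ip v u ^+ 2.
    by rewrite /A (normDZ Hip) ne1 ne2 e12; ring.
  set p := ip v x0; set q := ip v u.
  have bes : p ^+ 2 + q ^+ 2 <= `|v| ^+ 2.
    pose r := v + (- p) *: x0.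
    have hr : `|r| ^+ 2 = `|v| ^+ 2 - p ^+ 2.
      by rewrite /r normD1Z (ipC Hip v x0) -/p x01 -(ipC Hip v x0) -/p; ring.
    have rq : ip r u = q by rewrite /r (ipDl Hip) (ipZl Hip) x0u mulr0 addr0.
    have := sqr_ge0 (`|r + (- q) *: u|).
    rewrite normD1Z rq u1 hr => h; lra.
  by rewrite -ler_sqr ?nnegrE // h1; exact: bes.
have bA : bounded_linear A.
  split.
    move=> a v v'; rewrite /A !(ipL Hip) opprD !scalerDl !scalerDr !scalerA mulrN.
    by rewrite addrACA.
  by exists 1 => v; rewrite mul1r; exact: Ab.
have oA : opnorm A <= 1.
  by apply: opnorm_le => // v v1; exact: le_trans (Ab v) v1.
have p1 : phix ip T x0 A = 1.
  rewrite /phix /A /= (ipDl Hip) !(ipZl Hip) Txx Tux xx x0u.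
  by change (opnorm T) with N; field; rewrite gt_eqF.
have p2 : phix ip T u A = -1.
  rewrite /phix /A /= (ipDl Hip) !(ipZl Hip) Txu Tuu uu ux0.
  by change (opnorm T) with N; field; rewrite gt_eqF.
have hb : forall B, bounded_linear B -> opnorm B <= 1 ->
    `|phix ip T x0 B - phix ip T u B| <= 2.
  move=> B bB oB; apply: le_trans (ler_normB _ _) _.
  have := phix_bound Hip HT HT0 Mx0 bB; have := phix_bound Hip HT HT0 Mu bB; lra.
have := dnorm_ge hb bA oA.
rewrite /= p1 p2.
have := hs _ _ (J_phix Hip HT HT0 Mx0) (J_phix Hip HT HT0 Mu).
have -> : `|1 - -1| = 2 :> R by rewrite opprK ger0_norm.
lra.
Qed.

End Main4.

Unset Implicit Arguments.
Theorem theorem3p2 (R : realType) (H : completeNormedModType R)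
  (ip : H -> H -> R) (Hip : is_inner_product ip)
  (T : H -> H) (HT : compact_operator T) (HT0 : exists x, T x != 0) :
  [<-> (exists eps : R, 0 <= eps /\ eps < 2 /\ eps_smooth eps T);
       (exists x0 : H, `|x0| = 1 /\ MT T = [set x0; - x0]);
       smooth T].
Proof.
have NP := Npos HT HT0.
have bT := proj1 HT.
tfae.
- case=> eps [e0 [e2 hs]].
  have hE : forall eta, 0 < eta -> exists x, [set x : H | `|x| <= 1] x /\ opnorm T - eta < `|T x|.
    move=> eta he.
    have : opnorm T - eta < opnorm T by lra.
    move/sup_gt => []; first by exists `|T 0|, 0 => //=; rewrite normr0.
    by move=> _ [x /= x1 <-] h; exists x.
  have [z [Mz _]] := CL Hip HT HT0 (S := [set x : H | `|x| <= 1]) (fun x h => h) hE.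
  exists z; split; first by case: Mz.
  apply/seteqP; split => y.
  + move=> My.
    case: (pselect (y = z)) => [->|nz]; first by left.
    case: (pselect (y = - z)) => [->|nmz]; first by right.
    exfalso; have [u [Mu zu]] := orthoMT Hip HT HT0 Mz My nz nmz.
    exact: (not_two Hip HT HT0 Mz Mu zu e2 hs).
  + case => ->; first done.
    by case: Mz => z1 Tz; split; rewrite ?normrN // (linN _ bT) normrN.
- case=> x0 [x01 hM].
  have Mx0 : MT T x0 by rewrite hM; left.
  exists (phix ip T x0); split; first exact: (J_phix Hip HT HT0 Mx0).
  move=> psi Jpsi A bA.
  apply/eqP; rewrite eq_le; apply/andP; split; last exact: (uniq_lower Hip HT HT0 x01 hM Jpsi bA).
  have bA' := bl_scale (-1) bA.
  have := uniq_lower Hip HT HT0 x01 hM Jpsi bA'.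
  rewrite (dual_scale _ (proj1 Jpsi) bA) /phix (ipZl Hip).
  have : ip (A x0) (T x0) / opnorm T = phix ip T x0 A by [].
  move=> _; rewrite !mulN1r mulNr; lra.
- case=> phi [Jphi hu]; exists 0; split; first exact: lexx.
  split; first by lra.
  move=> p q Jp Jq; apply: dnorm_le => A bA oA.
  by rewrite (hu p Jp A bA) (hu q Jq A bA) subrr normr0.
Qed.
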